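(* In the setting of the context (with assumptions (A.1)–(A.3)), suppose the PMM generates infinite sequences $\{(u_k,v_k)\}$, $\{(z_k,w_k)\}$, $\{\gamma_k\}$, $\{\rho_k\}$; define $x_k=z_{k-1}+\lambda w_{k-1}+\lambda(Cv_k-d)$, $y_k=x_k-\lambda(w_{k-1}-Mu_k)$, and for $k\ge1$ $$\Gamma_k=\sum_{j=1}^k\rho_j\gamma_j,\quad \bar u_k=\frac1{\Gamma_k}\sum_{j=1}^k\rho_j\gamma_ju_j,\quad \bar v_k=\frac1{\Gamma_k}\sum_{j=1}^k\rho_j\gamma_jv_j,\quad \bar x_k=\frac1{\Gamma_k}\sum_{j=1}^k\rho_j\gamma_jx_j,\quad \bar y_k=\frac1{\Gamma_k}\sum_{j=1}^k\rho_j\gamma_jy_j,$$ $$\bar\epsilon_k^u=\frac1{\Gamma_k}\sum_{j=1}^k\rho_j\gamma_j\langle u_j-\bar u_k,-M^*y_j\rangle,\qquad \bar\epsilon_k^v=\frac1{\Gamma_k}\sum_{j=1}^k\rho_j\gamma_j\langle v_j-\bar v_k,-C^*x_j\rangle.$$ Let $d_0$ be the distance from $(z_0,w_0)$ to $S_e(\partial h_1,\partial h_2)$, $\tau=\min\{\lambda,1/\lambda\}$ and $\vartheta=\frac{1}{\tau^2(1-\bar\rho)^2}+1$. Then for every integer $k\ge1$, $$0\in\partial_{\bar\epsilon_k^v}g(\bar v_k)+C^*\bar x_k,\qquad 0\in\partial_{\bar\epsilon_k^u}f(\bar u_k)+M^*\bar y_k,$$ $$\|M\bar u_k+C\bar v_k-d\|\le\frac{4d_0}{k(1-\bar\rho)\tau},\qquad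 \|\bar x_k-\bar y_k\|\le\frac{4d_0}{k(1-\bar\rho)\tau},\qquad \bar\epsilon_k^u+\bar\epsilon_k^v\le\frac{8d_0^2\vartheta}{k(1-\bar\rho)\tau}.$$
   Context: Let $f:\mathbb{R}^{m_1}\to(-\infty,\infty]$, $g:\mathbb{R}^{m_2}\to(-\infty,\infty]$ be proper closed convex, $M:\mathbb{R}^{m_1}\to\mathbb{R}^n$, $C:\mathbb{R}^{m_2}\to\mathbb{R}^n$ linear, $d\in\mathbb{R}^n$; consider $\min\{f(u)+g(v):Mu+Cv=d\}$ with Lagrangian $L(u,v,z)=f(u)+g(v)+\langle Mu+Cv-d,z\rangle$. A saddle point is $(u^*,v^*,z^* )$ with $L(u^*,v^*,z^* )$ finite and $\min_{(u,v)}L(u,v,z^* )=L(u^*,v^*,z^* )=\max_zL(u^*,v^*,z)$. Let $h_1(z)=f^*(-M^*z)$, $h_2(z)=g^*(-C^*z)+\langle d,z\rangle$ ($^*$ on functions = Fenchel conjugate, on operators = adjoint), and $S_e(\partial h_1,\partial h_2)=\{(z,w)\in\mathbb{R}^n\times\mathbb{R}^n:-w\in\partial h_1(z),\ w\in\partial h_2(z)\}$ (a closed convex set). Standing assumptions: (A.1) $L$ has a saddle point; (A.2) $\mathrm{ri}(\mathrm{dom} f^* )\cap\mathrm{range}(M^* )\ne\emptyset$; (A.3) $\mathrm{ri}(\mathrm{dom} g^* )\cap\mathrm{range}(C^* )\ne\emptyset$. For $\epsilon\ge0$, $\partial_\epsilon \theta(x)=\{s:\theta(x')\ge\theta(x)+\langle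 s,x'-x\rangle-\epsilon\ \forall x'\}$. PMM: given $(z_0,w_0)\in\mathbb{R}^n\times\mathbb{R}^n$, $\lambda>0$, $\bar\rho\in[0,1)$, for $k=1,2,\dots$: (1) let $v_k$ be a minimizer of $g(v)+\langle z_{k-1}+\lambda w_{k-1},Cv-d\rangle+\frac\lambda2\|Cv-d\|^2$ and $u_k$ a minimizer of $f(u)+\langle z_{k-1}+\lambda(Cv_k-d),Mu\rangle+\frac\lambda2\|Mu\|^2$; (2) if $\|Mu_k+Cv_k-d\|+\|Mu_k-w_{k-1}\|=0$ stop; otherwise set $\gamma_k=\dfrac{\lambda\|Cv_k-d+w_{k-1}\|^2+\lambda\langle d-Cv_k-Mu_k,w_{k-1}-Mu_k\rangle}{\|Mu_k+Cv_k-d\|^2+\lambda^2\|Mu_k-w_{k-1}\|^2}$; (3) choose $\rho_k\in[1-\bar\rho,1+\bar\rho]$ and set $z_k=z_{k-1}+\rho_k\gamma_k(Mu_k+Cv_k-d)$, $w_k=w_{k-1}-\rho_k\gamma_k\lambda(w_{k-1}-Mu_k)$. *)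

(* Defs.v *)
(* R : realType, vectors are row vectors 'rV[R]_n,
   linear maps R^m -> R^n are matrices 'M[R]_(m,n) acting by u |-> u *m M,
   adjoint M^* is z |-> z *m M^T, extended-real valued functions take values
   in \bar R. *)
From HB Require Import structures.
From mathcomp Require Import all_boot all_order all_algebra.
From mathcomp Require Import boolp classical_sets reals constructive_ereal ereal.
Set Implicit Arguments. Unset Strict Implicit. Unset Printing Implicit Defensive.
Import Order.TTheory GRing.Theory Num.Theory.
Local Open Scope classical_set_scope.
Local Open Scope ring_scope.

Section ConvexDefs.
Variable R : realType.

Definition dotp n (u v : 'rV[R]_n) : R := \sum_(i < n) u 0 i * v 0 i.
Definition vnorm n (u : 'rV[R]_n) : R := Num.sqrt (dotp u u).

Definition proper_fun n (f : 'rV[R]_n -> \bar R) : Prop :=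
  (forall x, f x <> -oo%E) /\ (exists x, f x <> +oo%E).

(* convex (extended-real Jensen inequality; 0 * (+oo) = 0) *)
Definition convex_fun n (f : 'rV[R]_n -> \bar R) : Prop :=
  forall (x y : 'rV[R]_n) (t : R), 0 <= t <= 1 ->
    (f ((t *: x + (1 - t) *: y)%R) <= t%:E * f x + (1 - t)%:E * f y)%E.

(* closed: the epigraph {(x,a) | f x <= a} is closed *)
Definition closed_fun n (f : 'rV[R]_n -> \bar R) : Prop :=
  forall (x : 'rV[R]_n) (a : R),
    (forall e : R, 0 < e -> exists (y : 'rV[R]_n) (b : R),
        vnorm (y - x) < e /\ `|b - a| < e /\ (f y <= b%:E)%E) ->
    (f x <= a%:E)%E.

Definition fconj n (f : 'rV[R]_n -> \bar R) (s : 'rV[R]_n) : \bar R :=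
  ereal_sup [set ((dotp s x)%:E - f x)%E | x in [set: 'rV[R]_n]].

Definition edom n (f : 'rV[R]_n -> \bar R) : set 'rV[R]_n :=
  [set x | (f x < +oo)%E].

Definition aff_hull n (C : set 'rV[R]_n) : set 'rV[R]_n :=
  [set x | exists (k : nat) (a : 'I_k -> R) (p : 'I_k -> 'rV[R]_n),
     (forall i, C (p i)) /\ \sum_(i < k) a i = 1 /\ x = \sum_(i < k) a i *: p i].

Definition rel_int n (C : set 'rV[R]_n) : set 'rV[R]_n :=
  [set x | C x /\ exists e : R, 0 < e /\
     forall y, aff_hull C y -> vnorm (y - x) < e -> C y].

(* epsilon-subdifferential (empty outside the effective domain) *)
Definition esubdiff n (th : 'rV[R]_n -> \bar R) (eps : R) (x : 'rV[R]_n)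
  : set 'rV[R]_n :=
  [set s | th x \is a fin_num /\
     forall x', (th x + (dotp s (x' - x)%R - eps)%:E <= th x')%E].

Definition subdiff n (th : 'rV[R]_n -> \bar R) (x : 'rV[R]_n) : set 'rV[R]_n :=
  esubdiff th 0 x.

Definition Se n (h1 h2 : 'rV[R]_n -> \bar R) : set ('rV[R]_n * 'rV[R]_n) :=
  [set p | subdiff h1 p.1 (- p.2) /\ subdiff h2 p.1 p.2].

Definition dist_pair n (z0 w0 : 'rV[R]_n) (S : set ('rV[R]_n * 'rV[R]_n)) : R :=
  inf [set Num.sqrt (dotp (p.1 - z0) (p.1 - z0) + dotp (p.2 - w0) (p.2 - w0))
      | p in S].

Definition lagr m1 m2 n (f : 'rV[R]_m1 -> \bar R) (g : 'rV[R]_m2 -> \bar R)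
  (M : 'M[R]_(m1, n)) (C : 'M[R]_(m2, n)) (d : 'rV[R]_n)
  (u : 'rV[R]_m1) (v : 'rV[R]_m2) (z : 'rV[R]_n) : \bar R :=
  (f u + g v + (dotp (u *m M + v *m C - d) z)%:E)%E.

Definition saddle_point m1 m2 n (f : 'rV[R]_m1 -> \bar R) (g : 'rV[R]_m2 -> \bar R)
  (M : 'M[R]_(m1, n)) (C : 'M[R]_(m2, n)) (d : 'rV[R]_n)
  (us : 'rV[R]_m1) (vs : 'rV[R]_m2) (zs : 'rV[R]_n) : Prop :=
  lagr f g M C d us vs zs \is a fin_num /\
  (forall u v, (lagr f g M C d us vs zs <= lagr f g M C d u v zs)%E) /\
  (forall z, (lagr f g M C d us vs z <= lagr f g M C d us vs zs)%E).

Definition Gam (rho gamma : nat -> R) (k : nat) : R :=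
  \sum_(1 <= j < k.+1) rho j * gamma j.

Definition wavg n (rho gamma : nat -> R) (a : nat -> 'rV[R]_n) (k : nat)
  : 'rV[R]_n :=
  (Gam rho gamma k)^-1 *: \sum_(1 <= j < k.+1) (rho j * gamma j) *: a j.

End ConvexDefs.

(* Main.v *)
Require Import Defs.
From HB Require Import structures.
From mathcomp Require Import all_boot all_order all_algebra.
From mathcomp Require Import boolp classical_sets reals constructive_ereal ereal.
From mathcomp Require Import ring lra.
Import Order.TTheory GRing.Theory Num.Theory.
Local Open Scope classical_set_scope.
Local Open Scope ring_scope.

Set Implicit Arguments. Unset Strict Implicit.
Section Helpers.
Variable R : realType.
Implicit Types (n m : nat).

Ltac sumcomb := rewrite /dotp;
  repeat (rewrite -?sumrN ?mulr_sumr ?mulr_suml -?big_split /=).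
Ltac vdot := sumcomb; apply: eq_bigr => i _; rewrite !mxE; by field.

Lemma dotpC n (a b : 'rV[R]_n) : dotp a b = dotp b a.
Proof. by apply: eq_bigr => i _; rewrite mulrC. Qed.

Lemma dotp_ge0 n (a : 'rV[R]_n) : 0 <= dotp a a.
Proof. by apply: sumr_ge0 => i _; rewrite -expr2 sqr_ge0. Qed.

Lemma dotp_eq0 n (a : 'rV[R]_n) : dotp a a = 0 -> a = 0.
Proof.
move=> /eqP; rewrite psumr_eq0; last by move=> i _; rewrite -expr2 sqr_ge0.
move=> /allP H; apply/rowP => i; rewrite mxE.
by have := H i (mem_index_enum i); rewrite /= mulf_eq0 orbb => /eqP.
Qed.

Lemma dotpDr n (a b c : 'rV[R]_n) : dotp a (b + c) = dotp a b + dotp a c.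
Proof. vdot. Qed.
Lemma dotpDl n (a b c : 'rV[R]_n) : dotp (b + c) a = dotp b a + dotp c a.
Proof. vdot. Qed.
Lemma dotpBr n (a b c : 'rV[R]_n) : dotp a (b - c) = dotp a b - dotp a c.
Proof. vdot. Qed.
Lemma dotpBl n (a b c : 'rV[R]_n) : dotp (b - c) a = dotp b a - dotp c a.
Proof. vdot. Qed.
Lemma dotpNr n (a b : 'rV[R]_n) : dotp a (- b) = - dotp a b.
Proof. vdot. Qed.
Lemma dotpNl n (a b : 'rV[R]_n) : dotp (- b) a = - dotp b a.
Proof. vdot. Qed.
Lemma dotpZr n (a b : 'rV[R]_n) t : dotp a (t *: b) = t * dotp a b.
Proof. vdot. Qed.
Lemma dotpZl n (a b : 'rV[R]_n) t : dotp (t *: b) a = t * dotp b a.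
Proof. vdot. Qed.
Lemma dotp0r n (a : 'rV[R]_n) : dotp a 0 = 0.
Proof. by rewrite /dotp big1 // => i _; rewrite mxE mulr0. Qed.
Lemma dotp0l n (a : 'rV[R]_n) : dotp 0 a = 0.
Proof. by rewrite dotpC dotp0r. Qed.

Lemma dotp_sumr n (a : 'rV[R]_n) (I : Type) (r : seq I) (P : pred I) (F : I -> 'rV[R]_n) :
  dotp a (\sum_(j <- r | P j) F j) = \sum_(j <- r | P j) dotp a (F j).
Proof. by apply: (big_morph (dotp a) (dotpDr a) (dotp0r a)). Qed.
Lemma dotp_suml n (a : 'rV[R]_n) (I : Type) (r : seq I) (P : pred I) (F : I -> 'rV[R]_n) :
  dotp (\sum_(j <- r | P j) F j) a = \sum_(j <- r | P j) dotp (F j) a.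
Proof.
rewrite dotpC dotp_sumr; by apply: eq_bigr => j _; rewrite dotpC.
Qed.

Lemma dotp_mulmx m n (a : 'rV[R]_m) (K : 'M[R]_(m, n)) (b : 'rV[R]_n) :
  dotp (a *m K) b = dotp a (b *m K^T).
Proof.
rewrite /dotp.
under eq_bigr do rewrite mxE big_distrl /=.
under [RHS]eq_bigr do rewrite mxE big_distrr /=.
rewrite exchange_big /=; apply: eq_bigr => l _; apply: eq_bigr => i _.
by rewrite !mxE; ring.
Qed.

Lemma adjB m n (z : 'rV[R]_n) (K : 'M[R]_(m, n)) (a b : 'rV[R]_m) :
  dotp (- (z *m K^T)) (a - b) = dotp (b *m K) z - dotp (a *m K) z.
Proof.
by rewrite dotpC dotpNr -dotp_mulmx mulmxBl dotpBl opprB.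
Qed.

Lemma adj1 m n (z : 'rV[R]_n) (K : 'M[R]_(m, n)) (a : 'rV[R]_m) :
  dotp (- (z *m K^T)) a = - dotp (a *m K) z.
Proof. by rewrite dotpC dotpNr -dotp_mulmx. Qed.

Lemma lim0 (X Kc : R) : 0 <= Kc ->
  (forall t, 0 < t -> t <= 1 -> 0 <= X + t * Kc) -> 0 <= X.
Proof.
move=> hK H; rewrite leNgt; apply/negP => hX.
set s := - X.
have hs : 0 < s by rewrite /s oppr_gt0.
set t := s / (2 * (s + Kc)).
have hsk : 0 < 2 * (s + Kc) by lra.
have ht : t * (2 * (s + Kc)) = s by rewrite /t mulfVK // gt_eqF.
have t0 : 0 < t by rewrite /t divr_gt0.
have t1 : t <= 1.
  rewrite /t ler_pdivrMr //; lra.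
have := H t t0 t1.
have : t * Kc * (2 * (s + Kc)) = s * Kc by rewrite mulrAC ht.
move=> e1 h2.
have h3 : t * Kc <= s / 2.
  have : t * Kc * (2 * (s + Kc)) <= s / 2 * (2 * (s + Kc)).
    rewrite e1; have -> : s / 2 * (2 * (s + Kc)) = s * (s + Kc) by field.
    by rewrite ler_pM2l //; lra.
  by rewrite ler_pM2r.
rewrite /s in hs h3; lra.
Qed.


Lemma fin_ex n (H : 'rV[R]_n -> \bar R) x : H x \is a fin_num -> exists a, H x = a%:E.
Proof. by case: (H x) => // a _; exists a. Qed.

Lemma fconj_ge m (F : 'rV[R]_m -> \bar R) s x F0 :
  F x = F0%:E -> ((dotp s x - F0)%:E <= fconj F s)%E.
Proof.
move=> E; apply: ereal_sup_ubound; exists x => //; by rewrite E EFinB.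
Qed.

Lemma fconj_le m (F : 'rV[R]_m -> \bar R) s x0 F0 :
  F x0 = F0%:E -> (forall x, ((F0 + dotp s (x - x0))%:E <= F x)%E) ->
  (fconj F s <= (dotp s x0 - F0)%:E)%E.
Proof.
move=> E H; apply: ge_ereal_sup => _ [x _ <-].
have := H x; case: (F x) => [fx| |] //=.
- rewrite !lee_fin dotpBr => h; lra.
- by move=> _; rewrite addeNy ?leNye.
Qed.

Lemma subdiff_conj m n (F : 'rV[R]_m -> \bar R) (K : 'M[R]_(m, n))
  (H : 'rV[R]_n -> \bar R) (c z0 : 'rV[R]_n) (u0 : 'rV[R]_m) F0 :
  (forall z, H z = (fconj F (- (z *m K^T)) + (dotp c z)%:E)%E) ->
  F u0 = F0%:E ->
  (forall x, ((F0 + dotp (- (z0 *m K^T)) (x - u0))%:E <= F x)%E) ->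
  subdiff H z0 (c - u0 *m K).
Proof.
move=> HE E Hs.
have Hz0 : H z0 = (dotp (- (z0 *m K^T)) u0 - F0 + dotp c z0)%:E.
  rewrite HE EFinD; congr (_ + _)%E; apply/le_anti/andP; split.
    exact: fconj_le Hs.
  exact: fconj_ge.
split; first by rewrite Hz0.
move=> z; rewrite Hz0 HE.
apply: le_trans; last first.
  apply: leeD2r; exact: fconj_ge E.
rewrite -!EFinD lee_fin !adj1 dotpBl dotpBr dotpBr; lra.
Qed.

Lemma subdiff_mono n (H : 'rV[R]_n -> \bar R) x1 x2 s1 s2 :
  subdiff H x1 s1 -> subdiff H x2 s2 -> 0 <= dotp (x1 - x2) (s1 - s2).
Proof.
move=> [f1 h1] [f2 h2].
have [a Ea] := fin_ex f1; have [b Eb] := fin_ex f2.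
have := h1 x2; have := h2 x1; rewrite Ea Eb -!EFinD !lee_fin => e1 e2.
have -> : dotp (x1 - x2) (s1 - s2) = - (dotp s1 (x2 - x1) + dotp s2 (x1 - x2)).
  by vdot.
lra.
Qed.


Lemma prox_opt m n (F : 'rV[R]_m -> \bar R) (K : 'M[R]_(m, n)) (e c : 'rV[R]_n)
  (lam : R) (u0 : 'rV[R]_m) :
  proper_fun F -> convex_fun F -> 0 < lam ->
  (forall u', (F u0 + (dotp e (u0 *m K - c) + lam / 2 * dotp (u0 *m K - c) (u0 *m K - c))%:E
     <= F u' + (dotp e (u' *m K - c) + lam / 2 * dotp (u' *m K - c) (u' *m K - c))%:E)%E) ->
  exists F0, F u0 = F0%:E /\
    forall u', ((F0 + dotp (- ((e + lam *: (u0 *m K - c)) *m K^T)) (u' - u0))%:E <= F u')%E.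
Proof.
move=> [Fnm [x0 Fx0]] Fcv hl Hmin.
set Q := fun u : 'rV[R]_m => dotp e (u *m K - c) + lam / 2 * dotp (u *m K - c) (u *m K - c).
have HQ : forall u', (F u0 + (Q u0)%:E <= F u' + (Q u')%:E)%E by exact: Hmin.
have [F0 E0] : exists F0, F u0 = F0%:E.
  move: (HQ x0); case E: (F u0) => [F0| |]; first by exists F0.
  - case: (F x0) Fx0 (Fnm x0) => [fx| |] // _ _.
  - by have := Fnm u0; rewrite E.
exists F0; split => // u'.
case E1: (F u') => [F1| |]; last by have := Fnm u'; rewrite E1.
2: by rewrite leey.
rewrite lee_fin.
set P := u' *m K; set P0 := u0 *m K.
set zz := e + lam *: (P0 - c).
rewrite adjB -/P -/P0.
suff : 0 <= F1 - F0 + (dotp zz P - dotp zz P0) by rewrite !(dotpC _ zz); lra.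
apply: (@lim0 _ (lam / 2 * dotp (P - P0) (P - P0))).
  apply: mulr_ge0; [apply: divr_ge0; lra | exact: dotp_ge0].
move=> t t0 t1.
set ut := t *: u' + (1 - t) *: u0.
have Hc := Fcv u' u0 t.
have /Hc : 0 <= t <= 1 by apply/andP; split => //; exact: ltW.
rewrite E1 E0 -!EFinM -EFinD => {}Hc.
have HQt := HQ ut.
have [Ft EFt] : exists Ft, F ut = Ft%:E.
  move: Hc (Fnm ut); rewrite -/ut; case: (F ut) => [Ft| |] //; first by exists Ft.
rewrite -/ut EFt lee_fin in Hc.
rewrite E0 EFt -!EFinD lee_fin in HQt.
have eQ : Q ut - Q u0 = t * (dotp zz P - dotp zz P0) + t * (t * (lam / 2 * dotp (P - P0) (P - P0))).
  rewrite /Q /zz.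
  have -> : ut *m K = t *: P + (1 - t) *: P0 by rewrite mulmxDl !scalemxAl.
  vdot.
have : 0 <= t * (F1 - F0 + (dotp zz P - dotp zz P0) + t * (lam / 2 * dotp (P - P0) (P - P0))).
  have -> : t * (F1 - F0 + (dotp zz P - dotp zz P0) + t * (lam / 2 * dotp (P - P0) (P - P0)))
    = t * F1 + (1 - t) * F0 - F0 + (Q ut - Q u0) by rewrite eQ; ring.
  lra.
by rewrite pmulr_rge0.
Qed.


Section Wavg.
Variables (rho gamma : nat -> R).
Local Notation Gm := (Gam rho gamma).
Local Notation wv := (wavg rho gamma).

Lemma wavgB n (a b : nat -> 'rV[R]_n) k : wv (fun j => a j - b j) k = wv a k - wv b k.
Proof.
rewrite /wavg -scalerBr -sumrB; congr (_ *: _); apply: eq_bigr => j _; by rewrite scalerBr.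
Qed.
Lemma wavgD n (a b : nat -> 'rV[R]_n) k : wv (fun j => a j + b j) k = wv a k + wv b k.
Proof.
rewrite /wavg -scalerDr -big_split; congr (_ *: _); apply: eq_bigr => j _; by rewrite scalerDr.
Qed.
Lemma wavgN n (a : nat -> 'rV[R]_n) k : wv (fun j => - a j) k = - wv a k.
Proof.
rewrite /wavg -scalerN -sumrN; congr (_ *: _); apply: eq_bigr => j _; by rewrite scalerN.
Qed.
Lemma wavg_mulmx m n (a : nat -> 'rV[R]_m) (K : 'M[R]_(m, n)) k :
  wv (fun j => a j *m K) k = wv a k *m K.
Proof.
rewrite /wavg -scalemxAl mulmx_suml; congr (_ *: _); apply: eq_bigr => j _; by rewrite scalemxAl.
Qed.
Lemma wavg_const n (c : 'rV[R]_n) k : Gm k != 0 -> wv (fun _ => c) k = c.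
Proof. by move=> h; rewrite /wavg -scaler_suml scalerA mulVf // scale1r. Qed.
Lemma sum_wavg n (a : nat -> 'rV[R]_n) k : Gm k != 0 ->
  \sum_(1 <= j < k.+1) (rho j * gamma j) *: a j = Gm k *: wv a k.
Proof. by move=> h; rewrite /wavg scalerA divff // scale1r. Qed.

Lemma Gam_gt0 k : (0 < k)%N -> (forall j, (0 < j)%N -> 0 < rho j * gamma j) -> 0 < Gm k.
Proof.
move=> hk hal; rewrite /Gam.
case: k hk => // k _; rewrite big_nat_recr //=.
apply: ltr_wpDl; last exact: hal.
rewrite big_nat_cond; apply: sumr_ge0 => j /andP[/andP[hj _] _]; exact/ltW/hal.
Qed.

Lemma jensen m (F : 'rV[R]_m -> \bar R) (pt : nat -> 'rV[R]_m) (Fv : nat -> R) :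
  convex_fun F -> (forall x, F x <> -oo%E) ->
  (forall j, (0 < j)%N -> 0 < rho j * gamma j) ->
  (forall j, (0 < j)%N -> F (pt j) = (Fv j)%:E) ->
  forall k, (0 < k)%N -> exists r, F (wv pt k) = r%:E /\
    r <= (Gm k)^-1 * \sum_(1 <= j < k.+1) rho j * gamma j * Fv j.
Proof.
move=> Fcv Fnm hal hF; elim => // k IH _.
case: k IH => [_|k IH].
  have h1 : rho 1 * gamma 1 != 0 by rewrite gt_eqF // hal.
  exists (Fv 1); rewrite /wavg /Gam !big_nat1 scalerA mulVf // scale1r hF //.
  by split => //; rewrite mulrA mulVf // mul1r.
have [r [Er hr]] := IH isT.
set a := rho k.+2 * gamma k.+2.
have ha : 0 < a by rewrite hal.
have G0 : 0 < Gm k.+1 by apply: Gam_gt0.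
have eG : Gm k.+2 = Gm k.+1 + a by rewrite /Gam big_nat_recr.
have G1 : 0 < Gm k.+2 by rewrite eG; lra.
have G1' : 0 < Gm k.+1 + a by lra.
set t := Gm k.+1 / Gm k.+2.
have ept : wv pt k.+2 = t *: wv pt k.+1 + (1 - t) *: pt k.+2.
  rewrite /wavg /t big_nat_recr //= -/a eG.
  set S := \sum_(1 <= i < k.+2) _.
  apply/rowP => i; rewrite !mxE; field.
  by rewrite (lt0r_neq0 G0) (lt0r_neq0 G1').
have ht : 0 <= t <= 1.
  apply/andP; split; first by rewrite /t divr_ge0 // ltW.
  by rewrite /t ler_pdivrMr // mul1r eG; lra.
have := Fcv (wv pt k.+1) (pt k.+2) t ht.
rewrite -ept Er hF // -!EFinM -EFinD.
case E: (F (wv pt k.+2)) => [r'| |] //; last by have := Fnm (wv pt k.+2); rewrite E.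
rewrite lee_fin => h; exists r'; split => //.
apply: (le_trans h).
rewrite eG big_nat_recr //= -/a.
have -> : (Gm k.+1 + a)^-1 * (\sum_(1 <= i < k.+2) rho i * gamma i * Fv i + a * Fv k.+2)
  = t * ((Gm k.+1)^-1 * \sum_(1 <= i < k.+2) rho i * gamma i * Fv i) + (1 - t) * Fv k.+2.
  rewrite /t eG; field.
  by rewrite (lt0r_neq0 G0) (lt0r_neq0 G1').
apply: lerD; last by [].
apply: ler_wpM2l => //; first by rewrite /t divr_ge0 // ltW.
Qed.


Lemma dot3 n (s x p P : 'rV[R]_n) : dotp s (x - P) - dotp (p - P) s = dotp s (x - p).
Proof. vdot. Qed.
Lemma sqB n (a b : 'rV[R]_n) : dotp (a - b) (a - b) = dotp a a - 2 * dotp a b + dotp b b.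
Proof. vdot. Qed.

Lemma ergodic_esub m (F : 'rV[R]_m -> \bar R) (pt s : nat -> 'rV[R]_m) (Fv : nat -> R) k :
  convex_fun F -> (forall x, F x <> -oo%E) -> (0 < k)%N ->
  (forall j, (0 < j)%N -> 0 < rho j * gamma j) ->
  (forall j, (0 < j)%N -> F (pt j) = (Fv j)%:E /\
      forall x, ((Fv j + dotp (s j) (x - pt j))%:E <= F x)%E) ->
  esubdiff F ((Gm k)^-1 * \sum_(1 <= j < k.+1) rho j * gamma j * dotp (pt j - wv pt k) (s j))
     (wv pt k) (wv s k).
Proof.
move=> Fcv Fnm hk hal hF.
have G0 := Gam_gt0 hk hal.
have [r [Er hr]] := jensen Fcv Fnm hal (fun j hj => (hF j hj).1) hk.
split; first by rewrite Er.
move=> x; rewrite Er.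
case Ex: (F x) => [fx| |]; [|by rewrite leey|by have := Fnm x; rewrite Ex].
rewrite -EFinD lee_fin.
have hsum : (Gm k)^-1 * \sum_(1 <= j < k.+1) rho j * gamma j * (Fv j + dotp (s j) (x - pt j)) <= fx.
  have : \sum_(1 <= j < k.+1) rho j * gamma j * (Fv j + dotp (s j) (x - pt j))
      <= \sum_(1 <= j < k.+1) rho j * gamma j * fx.
    rewrite big_nat_cond [X in _ <= X]big_nat_cond; apply: ler_sum => j /andP[/andP[hj _] _].
    apply: ler_wpM2l; first exact/ltW/hal.
    by have := (hF j hj).2 x; rewrite Ex lee_fin.
  rewrite -big_distrl /= -/(Gm k) => h.
  by rewrite ler_pdivrMl.
have eid : dotp (wv s k) (x - wv pt k)
    - (Gm k)^-1 * \sum_(1 <= j < k.+1) rho j * gamma j * dotp (pt j - wv pt k) (s j)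
    = (Gm k)^-1 * \sum_(1 <= j < k.+1) rho j * gamma j * dotp (s j) (x - pt j).
  move: (wv pt k) => P.
  rewrite /wavg dotpZl dotp_suml -mulrBr; congr (_ * _); rewrite -sumrB.
  by apply: eq_bigr => j _; rewrite dotpZl -mulrBr dot3.
have esp : (Gm k)^-1 * \sum_(1 <= j < k.+1) rho j * gamma j * (Fv j + dotp (s j) (x - pt j))
   = (Gm k)^-1 * \sum_(1 <= j < k.+1) rho j * gamma j * Fv j
     + (Gm k)^-1 * \sum_(1 <= j < k.+1) rho j * gamma j * dotp (s j) (x - pt j).
  by rewrite -mulrDr -big_split; congr (_ * _); apply: eq_bigr => j _; rewrite mulrDr.
rewrite esp -eid in hsum; lra.
Qed.

Lemma sqjensen n (X : nat -> 'rV[R]_n) k : (0 < k)%N ->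
  (forall j, (0 < j)%N -> 0 < rho j * gamma j) ->
  dotp (wv X k) (wv X k) <=
    (Gm k)^-1 * \sum_(1 <= j < k.+1) rho j * gamma j * dotp (X j) (X j).
Proof.
move=> hk hal; have G0 := Gam_gt0 hk hal.
have hS := sum_wavg X (lt0r_neq0 G0).
move: (wv X k) hS => Xb hS.
have h0 : 0 <= \sum_(1 <= j < k.+1) rho j * gamma j * dotp (X j - Xb) (X j - Xb).
  rewrite big_nat_cond; apply: sumr_ge0 => j /andP[/andP[hj _] _].
  apply: mulr_ge0; [exact/ltW/hal | exact: dotp_ge0].
have e1 : \sum_(1 <= j < k.+1) rho j * gamma j * dotp (X j - Xb) (X j - Xb)
   = \sum_(1 <= j < k.+1) rho j * gamma j * dotp (X j) (X j)
     - 2 * (\sum_(1 <= j < k.+1) rho j * gamma j * dotp (X j) Xb)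
     + (\sum_(1 <= j < k.+1) rho j * gamma j) * dotp Xb Xb.
  rewrite big_distrl /= mulr_sumr -sumrB -big_split /=; apply: eq_bigr => j _; rewrite sqB; ring.
have e2 : \sum_(1 <= j < k.+1) rho j * gamma j * dotp (X j) Xb = Gm k * dotp Xb Xb.
  under eq_bigr do rewrite -dotpZl.
  by rewrite -dotp_suml hS dotpZl.
rewrite e1 e2 -/(Gam rho gamma k) in h0.
rewrite ler_pdivlMl //; lra.
Qed.

End Wavg.

Lemma minlam (lam : R) : 0 < lam ->
  (Num.min lam lam^-1 = lam /\ lam ^+ 2 <= 1) \/ (Num.min lam lam^-1 = lam^-1 /\ 1 <= lam ^+ 2).
Proof.
move=> hl; have hli : lam * lam^-1 = 1 by rewrite mulfV // gt_eqF.
have li0 : 0 < lam^-1 by rewrite invr_gt0.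
rewrite /Num.min; case: ifP => h.
- left; split => //; have : lam * lam <= lam * lam^-1 by rewrite ler_pM2l // ltW.
  by rewrite hli expr2.
- right; split => //; move/negbT: h; rewrite -leNgt => h.
  have : lam * lam^-1 <= lam * lam by rewrite ler_pM2l.
  by rewrite hli expr2.
Qed.

Lemma scal1 (lam a2 b2 r2 : R) : 0 < lam -> 0 <= a2 -> 0 <= b2 -> 0 <= r2 ->
  Num.min lam lam^-1 * (r2 + lam^+2 * b2) <= 2 * lam * ((a2 + b2 + r2) / 2).
Proof.
move=> hl ha hb hr.
have hli : lam * lam^-1 = 1 by rewrite mulfV // gt_eqF.
have li0 : 0 < lam^-1 by rewrite invr_gt0.
have -> : 2 * lam * ((a2 + b2 + r2) / 2) = lam * (a2 + b2 + r2) by field.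
case: (minlam hl) => [[-> h1]|[-> h1]].
- rewrite ler_pM2l //; nra.
- have e : lam^-1 * (lam ^+ 2 * b2) = lam * b2 by rewrite expr2 mulrA mulrA (mulrC lam^-1) hli mul1r.
  rewrite mulrDr e.
  have : lam^-1 <= lam.
    have : lam^-1 * 1 <= lam^-1 * lam ^+ 2 by rewrite ler_pM2l.
    by rewrite mulr1 expr2 mulrA (mulrC lam^-1) hli mul1r.
  move=> hll; have : lam^-1 * r2 <= lam * r2 by rewrite ler_wpM2r.
  nra.
Qed.

Lemma scal2 (lam a2 b2 r2 : R) : 0 < lam -> 0 <= a2 -> 0 <= b2 -> 0 <= r2 ->
  (Num.min lam lam^-1) ^+ 2 * (lam ^+ 2 * a2 + b2) * (r2 + lam ^+ 2 * b2)
  <= 4 * (lam * ((a2 + b2 + r2) / 2)) ^+ 2.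
Proof.
move=> hl ha hb hr.
have hli : lam * lam^-1 = 1 by rewrite mulfV // gt_eqF.
have -> : 4 * (lam * ((a2 + b2 + r2) / 2)) ^+ 2 = lam ^+ 2 * ((a2 + b2 + r2) * (a2 + b2 + r2)) by field.
set S := a2 + b2 + r2.
have l2 : 0 < lam ^+ 2 by rewrite exprn_gt0.
case: (minlam hl) => [[-> h1]|[-> h1]].
- rewrite -mulrA ler_pM2l //.
  have ea : lam ^+ 2 * a2 <= a2 by rewrite ler_piMl.
  have eb : lam ^+ 2 * b2 <= b2 by rewrite ler_piMl.
  have ea0 : 0 <= lam ^+ 2 * a2 by rewrite mulr_ge0 // ltW.
  have eb0 : 0 <= lam ^+ 2 * b2 by rewrite mulr_ge0 // ltW.
  apply: ler_pM; rewrite /S; lra.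
- have e : lam^-1 ^+ 2 * lam ^+ 2 = 1 by rewrite -exprMn mulrC hli expr1n.
  have : (lam ^+ 2 * a2 + b2) * (r2 + lam ^+ 2 * b2) <= (lam ^+ 2 * S) * (lam ^+ 2 * S).
    have ea0 : 0 <= lam ^+ 2 * a2 by rewrite mulr_ge0 // ltW.
    have eb0 : 0 <= lam ^+ 2 * b2 by rewrite mulr_ge0 // ltW.
    have eb : b2 <= lam ^+ 2 * b2 by rewrite ler_peMl.
    have er : r2 <= lam ^+ 2 * r2 by rewrite ler_peMl.
    apply: ler_pM; rewrite /S ?mulrDr; lra.
  move=> h2.
  have li2 : 0 <= lam^-1 ^+ 2 by rewrite exprn_ge0 // invr_ge0 ltW.
  have := ler_wpM2l li2 h2.
  have -> : lam^-1 ^+ 2 * (lam ^+ 2 * S * (lam ^+ 2 * S)) = lam ^+ 2 * (S * S).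
    by rewrite -(mul1r (lam ^+ 2 * (S * S))) -e; ring.
  by rewrite -!mulrA.
Qed.

Lemma keyid n (zp wp U V d z w : 'rV[R]_n) (lam al : R) :
  al * (dotp (z - (zp + lam *: wp + lam *: (V - d))) (w - (d - V))
        + dotp (z - (zp + lam *: wp + lam *: (V - d) - lam *: (wp - U))) (U - w)) =
  (dotp (z - zp) (z - zp) + dotp (w - wp) (w - wp)
   - dotp (z - (zp + al *: (U + V - d))) (z - (zp + al *: (U + V - d)))
   - dotp (w - (wp - (al * lam) *: (wp - U))) (w - (wp - (al * lam) *: (wp - U)))) / 2
  + al^+2 / 2 * (dotp (U + V - d) (U + V - d) + lam ^+ 2 * dotp (U - wp) (U - wp))
  - al * (lam * dotp (V - d + wp) (V - d + wp) + lam * dotp (d - V - U) (wp - U)).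
Proof. vdot. Qed.

Lemma numid n (wp U V d : 'rV[R]_n) (lam : R) :
  lam * dotp (V - d + wp) (V - d + wp) + lam * dotp (d - V - U) (wp - U) =
  lam * ((dotp (V - d + wp) (V - d + wp) + dotp (U - wp) (U - wp)
          + dotp (U + V - d) (U + V - d)) / 2).
Proof. vdot. Qed.

Lemma xdiff n (zp wp V d : 'rV[R]_n) (lam : R) :
  dotp (zp + lam *: wp + lam *: (V - d) - zp) (zp + lam *: wp + lam *: (V - d) - zp)
  = lam ^+ 2 * dotp (V - d + wp) (V - d + wp).
Proof. vdot. Qed.

Lemma tri n (a b c : 'rV[R]_n) :
  dotp (a - c) (a - c) <= 2 * dotp (b - a) (b - a) + 2 * dotp (b - c) (b - c).
Proof.
have -> : 2 * dotp (b - a) (b - a) + 2 * dotp (b - c) (b - c)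
  = dotp (a - c) (a - c) + dotp (b - a + (b - c)) (b - a + (b - c)) by vdot.
by rewrite lerDl dotp_ge0.
Qed.

Lemma sqC n (a b : 'rV[R]_n) : dotp (a - b) (a - b) = dotp (b - a) (b - a).
Proof. vdot. Qed.

Lemma phi_ident n (Xb Ub Vb U V xj yj d : 'rV[R]_n) :
  dotp (Xb - xj) (Ub - (d - V)) + dotp (Xb - yj) (U - Ub) =
  (dotp Ub yj - dotp U yj) + (dotp Vb xj - dotp V xj)
  + (dotp Xb (U + V - d) - dotp xj (Ub + Vb - d)).
Proof. vdot. Qed.

Lemma vnormZ n (c : R) (X : 'rV[R]_n) : 0 <= c -> vnorm (c *: X) = c * vnorm X.
Proof.
move=> hc; rewrite /vnorm dotpZl dotpZr mulrA -expr2 sqrtrM ?sqr_ge0 //.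
by rewrite sqrtr_sqr ger0_norm.
Qed.

Lemma vnorm_le n (X : 'rV[R]_n) a : 0 <= a -> dotp X X <= 4 * a -> vnorm X <= 2 * Num.sqrt a.
Proof.
move=> ha h; rewrite /vnorm; apply: (@le_trans _ _ (Num.sqrt (4 * a))).
  by rewrite ler_sqrt // mulr_ge0.
have -> : (4 : R) = 2 ^+ 2 by ring.
by rewrite sqrtrM ?sqr_ge0 // sqrtr_sqr ger0_norm.
Qed.

Lemma saddle_Se m1 m2 n (f : 'rV[R]_m1 -> \bar R) (g : 'rV[R]_m2 -> \bar R)
  (M : 'M[R]_(m1, n)) (C : 'M[R]_(m2, n)) (d : 'rV[R]_n) us vs zs
  (h1 h2 : 'rV[R]_n -> \bar R) :
  proper_fun f -> proper_fun g ->
  (forall z, h1 z = (fconj f (- (z *m M^T)) + (dotp 0 z)%:E)%E) ->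
  (forall z, h2 z = (fconj g (- (z *m C^T)) + (dotp d z)%:E)%E) ->
  saddle_point f g M C d us vs zs -> Se h1 h2 (zs, us *m M).
Proof.
move=> [fnm _] [gnm _] H1 H2 [fin [Hmin Hmax]].
have [F0 Ef] : exists F0, f us = F0%:E.
  move: fin; rewrite /lagr; case E: (f us) => [F0| |]; first by exists F0.
  - by case: (g vs) (gnm vs).
  - by have := fnm us; rewrite E.
have [G0 Eg] : exists G0, g vs = G0%:E.
  move: fin; rewrite /lagr Ef; case E: (g vs) => [G0| |]; first by exists G0.
  - by [].
  - by have := gnm vs; rewrite E.
have r0 : us *m M + vs *m C - d = 0.
  apply: dotp_eq0; apply/le_anti/andP; split; last exact: dotp_ge0.
  have := Hmax (zs + (us *m M + vs *m C - d)); rewrite /lagr Ef Eg -!EFinD lee_fin dotpDr; lra.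
have Hf : forall u', ((F0 + dotp (- (zs *m M^T)) (u' - us))%:E <= f u')%E.
  move=> u'; have := Hmin u' vs; rewrite /lagr Ef Eg.
  case E: (f u') => [fu| |]; [ | by move=> _; rewrite leey | by have := fnm u'; rewrite E].
  rewrite -!EFinD !lee_fin adjB !dotpDl !dotpNl => h; lra.
have Hg : forall v', ((G0 + dotp (- (zs *m C^T)) (v' - vs))%:E <= g v')%E.
  move=> v'; have := Hmin us v'; rewrite /lagr Ef Eg.
  case E: (g v') => [gv| |]; [ | by move=> _; rewrite leey | by have := gnm v'; rewrite E].
  rewrite -!EFinD !lee_fin adjB !dotpDl !dotpNl => h; lra.
split => /=.
  by have := subdiff_conj H1 Ef Hf; rewrite sub0r.
have := subdiff_conj H2 Eg Hg.
have -> : d - vs *m C = us *m M.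
  by move/eqP: r0; rewrite subr_eq0 => /eqP <-; rewrite addrK.
done.
Qed.

End Helpers.
Unset Implicit Arguments. Set Strict Implicit.

Theorem mainTheorem8 (R : realType) (m1 m2 n : nat)
  (f : 'rV[R]_m1 -> \bar R) (g : 'rV[R]_m2 -> \bar R)
  (M : 'M[R]_(m1, n)) (C : 'M[R]_(m2, n)) (d : 'rV[R]_n)
  (lam rhobar : R)
  (u : nat -> 'rV[R]_m1) (v : nat -> 'rV[R]_m2) (z w : nat -> 'rV[R]_n)
  (gamma rho : nat -> R) :
  proper_fun f -> closed_fun f -> convex_fun f ->
  proper_fun g -> closed_fun g -> convex_fun g ->
  (* (A.1) *)
  (exists us vs zs, saddle_point f g M C d us vs zs) ->
  (* (A.2), (A.3) *)
  (exists s, rel_int (edom (fconj f)) (s *m M^T)) ->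
  (exists s, rel_int (edom (fconj g)) (s *m C^T)) ->
  0 < lam -> 0 <= rhobar < 1 ->
  (* PMM, step 1 *)
  (forall k, (0 < k)%N -> forall v' : 'rV[R]_m2,
     (g (v k) + (dotp (z k.-1 + lam *: w k.-1) (v k *m C - d)
                 + lam / 2 * dotp (v k *m C - d) (v k *m C - d))%:E
      <= g v' + (dotp (z k.-1 + lam *: w k.-1) (v' *m C - d)
                 + lam / 2 * dotp (v' *m C - d) (v' *m C - d))%:E)%E) ->
  (forall k, (0 < k)%N -> forall u' : 'rV[R]_m1,
     (f (u k) + (dotp (z k.-1 + lam *: (v k *m C - d)) (u k *m M)
                 + lam / 2 * dotp (u k *m M) (u k *m M))%:E
      <= f u' + (dotp (z k.-1 + lam *: (v k *m C - d)) (u' *m M)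
                 + lam / 2 * dotp (u' *m M) (u' *m M))%:E)%E) ->
  (* PMM, step 2: the method never stops *)
  (forall k, (0 < k)%N ->
     vnorm (u k *m M + v k *m C - d) + vnorm (u k *m M - w k.-1) != 0) ->
  (forall k, (0 < k)%N ->
     gamma k =
       (lam * dotp (v k *m C - d + w k.-1) (v k *m C - d + w k.-1)
        + lam * dotp (d - v k *m C - u k *m M) (w k.-1 - u k *m M))
       / (dotp (u k *m M + v k *m C - d) (u k *m M + v k *m C - d)
          + lam ^+ 2 * dotp (u k *m M - w k.-1) (u k *m M - w k.-1))) ->
  (* PMM, step 3 *)
  (forall k, (0 < k)%N -> 1 - rhobar <= rho k <= 1 + rhobar) ->
  (forall k, (0 < k)%N ->
     z k = z k.-1 + (rho k * gamma k) *: (u k *m M + v k *m C - d)) ->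
  (forall k, (0 < k)%N ->
     w k = w k.-1 - (rho k * gamma k * lam) *: (w k.-1 - u k *m M)) ->
  let x := fun k => z k.-1 + lam *: w k.-1 + lam *: (v k *m C - d) in
  let y := fun k => x k - lam *: (w k.-1 - u k *m M) in
  let ubar := wavg rho gamma u in
  let vbar := wavg rho gamma v in
  let xbar := wavg rho gamma x in
  let ybar := wavg rho gamma y in
  let epsu := fun k => (Gam rho gamma k)^-1 *
      \sum_(1 <= j < k.+1) rho j * gamma j * dotp (u j - ubar k) (- (y j *m M^T)) in
  let epsv := fun k => (Gam rho gamma k)^-1 *
      \sum_(1 <= j < k.+1) rho j * gamma j * dotp (v j - vbar k) (- (x j *m C^T)) in
  let h1 := fun zz => fconj f (- (zz *m M^T)) in
  let h2 := fun zz => (fconj g (- (zz *m C^T)) + (dotp d zz)%:E)%E in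
  let d0 := dist_pair (z 0%N) (w 0%N) (Se h1 h2) in
  let tau := Num.min lam lam^-1 in
  let theta := (tau ^+ 2 * (1 - rhobar) ^+ 2)^-1 + 1 in
  forall k, (0 < k)%N ->
  [/\ exists s, esubdiff g (epsv k) (vbar k) s /\ 0 = s + xbar k *m C^T,
      exists s, esubdiff f (epsu k) (ubar k) s /\ 0 = s + ybar k *m M^T,
      vnorm (ubar k *m M + vbar k *m C - d)
        <= 4 * d0 / (k%:R * (1 - rhobar) * tau),
      vnorm (xbar k - ybar k) <= 4 * d0 / (k%:R * (1 - rhobar) * tau)
    & epsu k + epsv k <= 8 * d0 ^+ 2 * theta / (k%:R * (1 - rhobar) * tau)].
Proof.
move=> fP fC fV gP gC gV [us [vs [zs Hsad]]] _ _ hl /andP[rb0 rb1] Hv Hu Hns Hg Hrho Hz Hw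
  x y ubar vbar xbar ybar epsu epsv h1 h2 d0 tau theta k hk.
have eqle : forall a b : R, a = b -> a <= b by move=> a b ->.
have tau0 : 0 < tau.
  by rewrite /tau; case: (minlam hl) => [[-> _]|[-> _]] //; rewrite invr_gt0.
have rb1' : 0 < 1 - rhobar by lra.
pose G j := dotp (u j *m M + v j *m C - d) (u j *m M + v j *m C - d)
  + lam ^+ 2 * dotp (u j *m M - w j.-1) (u j *m M - w j.-1).
pose E j := rho j * (2 - rho j) * gamma j ^+ 2 * G j.
have l2 : 0 < lam ^+ 2 by rewrite exprn_gt0.
have G0 : forall j, (0 < j)%N -> 0 < G j.
  move=> j hj; have := Hns j hj; rewrite /vnorm /G.
  have ha := dotp_ge0 (u j *m M + v j *m C - d).
  have hb := dotp_ge0 (u j *m M - w j.-1).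
  have [e1|e1] := eqVneq (dotp (u j *m M + v j *m C - d) (u j *m M + v j *m C - d)) 0;
  have [e2|e2] := eqVneq (dotp (u j *m M - w j.-1) (u j *m M - w j.-1)) 0.
  - by rewrite e1 e2 sqrtr0 addr0 eqxx.
  - move=> _; have : 0 < dotp (u j *m M - w j.-1) (u j *m M - w j.-1) by rewrite lt0r e2.
    move=> h; rewrite e1 add0r; exact: mulr_gt0.
  - move=> _; have : 0 < dotp (u j *m M + v j *m C - d) (u j *m M + v j *m C - d) by rewrite lt0r e1.
    move=> h; rewrite e2 mulr0 addr0 //.
  - move=> _; have : 0 < dotp (u j *m M + v j *m C - d) (u j *m M + v j *m C - d) by rewrite lt0r e1.
    move=> h; apply: ltr_wpDr => //; apply: mulr_ge0 => //; exact: ltW.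
have gG : forall j, (0 < j)%N ->
    lam * dotp (v j *m C - d + w j.-1) (v j *m C - d + w j.-1)
    + lam * dotp (d - v j *m C - u j *m M) (w j.-1 - u j *m M) = gamma j * G j.
  by move=> j hj; rewrite (Hg j hj) divfK // gt_eqF // G0.
have gam_lb : forall j, (0 < j)%N -> tau / 2 <= gamma j.
  move=> j hj; have hG := G0 j hj; have := gG j hj; rewrite numid => e.
  have := scal1 hl (dotp_ge0 (v j *m C - d + w j.-1)) (dotp_ge0 (u j *m M - w j.-1))
    (dotp_ge0 (u j *m M + v j *m C - d)).
  rewrite -/tau -/(G j) => h.
  have : tau / 2 * G j <= gamma j * G j by rewrite -e; lra.
  by rewrite ler_pM2r.
have al_lb : forall j, (0 < j)%N -> (1 - rhobar) * (tau / 2) <= rho j * gamma j.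
  move=> j hj; have [h1r h2r] := andP (Hrho j hj).
  apply: ler_pM => //; [exact: ltW | apply: divr_ge0 => //; exact: ltW | exact: gam_lb].
have al0 : forall j, (0 < j)%N -> 0 < rho j * gamma j.
  move=> j hj; apply: lt_le_trans (al_lb j hj); apply: mulr_gt0 => //; exact: divr_gt0.
have gam0 : forall j, (0 < j)%N -> 0 < gamma j.
  move=> j hj; apply: lt_le_trans (gam_lb j hj); exact: divr_gt0.
have rho0 : forall j, (0 < j)%N -> 0 < rho j.
  move=> j hj; have [h1r _] := andP (Hrho j hj); lra.
have Gam0 : 0 < Gam rho gamma k by exact: Gam_gt0.
have Gam_lb : k%:R * (1 - rhobar) * tau / 2 <= Gam rho gamma k.
  have : \sum_(1 <= j < k.+1) ((1 - rhobar) * (tau / 2)) <= Gam rho gamma k.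
    rewrite /Gam big_nat_cond [X in _ <= X]big_nat_cond.
    apply: ler_sum => j /andP[/andP[hj _] _]; exact: al_lb.
  rewrite sumr_const_nat subSS subn0 -mulr_natl; apply: le_trans.
  by apply: eqle; ring.
have sg_g : forall j, (0 < j)%N -> g (v j) = (fine (g (v j)))%:E /\
    forall v', ((fine (g (v j)) + dotp (- (x j *m C^T)) (v' - v j))%:E <= g v')%E.
  move=> j hj; have [Gv [EG HG]] := prox_opt gP gV hl (Hv j hj).
  by rewrite EG /=; split.
have sg_f : forall j, (0 < j)%N -> f (u j) = (fine (f (u j)))%:E /\
    forall u', ((fine (f (u j)) + dotp (- (y j *m M^T)) (u' - u j))%:E <= f u')%E.
  move=> j hj.
  have H' : forall u', (f (u j) + (dotp (z j.-1 + lam *: (v j *m C - d)) (u j *m M - 0)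
      + lam / 2 * dotp (u j *m M - 0) (u j *m M - 0))%:E
      <= f u' + (dotp (z j.-1 + lam *: (v j *m C - d)) (u' *m M - 0)
      + lam / 2 * dotp (u' *m M - 0) (u' *m M - 0))%:E)%E.
    by move=> u'; rewrite !subr0; exact: Hu.
  have [Fu [EF HF]] := prox_opt fP fV hl H'.
  rewrite EF /=; split => // u'.
  have -> : y j = z j.-1 + lam *: (v j *m C - d) + lam *: (u j *m M - 0).
    rewrite /y /x /= subr0; move: (u j *m M) (v j *m C) => P Q.
    by apply/rowP => i; rewrite !mxE; ring.
  exact: HF.
have h1E : forall zz, h1 zz = (fconj f (- (zz *m M^T)) + (dotp 0 zz)%:E)%E.
  by move=> zz; rewrite /h1 dotp0l adde0.
have h2E : forall zz, h2 zz = (fconj g (- (zz *m C^T)) + (dotp d zz)%:E)%E by [].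
have sd2 : forall j, (0 < j)%N -> subdiff h2 (x j) (d - v j *m C).
  move=> j hj; have [EG HG] := sg_g j hj; exact: subdiff_conj h2E EG HG.
have sd1 : forall j, (0 < j)%N -> subdiff h1 (y j) (- (u j *m M)).
  move=> j hj; have [EF HF] := sg_f j hj.
  by have := subdiff_conj h1E EF HF; rewrite sub0r.
pose phi j (p : 'rV[R]_n * 'rV[R]_n) :=
  dotp (p.1 - x j) (p.2 - (d - v j *m C)) + dotp (p.1 - y j) (u j *m M - p.2).
have phi_ge0 : forall j, (0 < j)%N -> forall p, Se h1 h2 p -> 0 <= phi j p.
  move=> j hj [zz ww] [/= s1 s2].
  have mo1 := subdiff_mono s2 (sd2 j hj).
  have mo2 := subdiff_mono s1 (sd1 j hj).
  rewrite /phi /=.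
  have -> : u j *m M - ww = - ww - - (u j *m M) by rewrite opprK addrC.
  exact: addr_ge0.
pose D (p : 'rV[R]_n * 'rV[R]_n) i :=
  dotp (p.1 - z i) (p.1 - z i) + dotp (p.2 - w i) (p.2 - w i).
have D_ge0 : forall p i, 0 <= D p i.
  by move=> p i; rewrite /D; apply: addr_ge0; exact: dotp_ge0.
have KEYj : forall j, (0 < j)%N -> forall p,
    rho j * gamma j * phi j p = (D p j.-1 - D p j) / 2 - E j / 2.
  move=> j hj [zz ww]; rewrite /phi /D /= (Hz j hj) (Hw j hj) /y /x /=.
  rewrite keyid gG // -/(G j) /E; by field.
have E0 : forall j, (0 < j)%N -> 0 <= E j.
  move=> j hj; have [h1r h2r] := andP (Hrho j hj).
  rewrite /E; apply: mulr_ge0; last exact: ltW (G0 j hj).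
  apply: mulr_ge0; last exact: sqr_ge0.
  apply: mulr_ge0; [exact: ltW (rho0 j hj) | lra].
have fej : forall p, Se h1 h2 p -> forall j, (0 < j)%N -> D p j <= D p j.-1 - E j.
  move=> p Sp j hj; have := KEYj j hj p.
  have := mulr_ge0 (ltW (al0 j hj)) (phi_ge0 j hj p Sp); lra.
have fejD : forall p, Se h1 h2 p -> forall j, D p j <= D p 0.
  move=> p Sp; elim => // j IH.
  have := fej p Sp j.+1 isT; have := E0 j.+1 isT; rewrite /=; lra.
have g2G : forall p, Se h1 h2 p -> forall j, (0 < j)%N ->
    (1 - rhobar) ^+ 2 * (gamma j ^+ 2 * G j) <= D p 0.
  move=> p Sp j hj.
  have hE : E j <= D p 0.
    have := fej p Sp j hj; have := fejD p Sp j.-1; have := D_ge0 p j; lra.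
  apply: le_trans hE; rewrite /E -mulrA.
  apply: ler_wpM2r; first by apply: mulr_ge0; [exact: sqr_ge0 | exact: ltW (G0 j hj)].
  have [h1r h2r] := andP (Hrho j hj); nra.
have qbound : forall p, Se h1 h2 p -> forall j, (0 < j)%N ->
    dotp (x j - z 0%N) (x j - z 0%N) + dotp (u j *m M - w 0%N) (u j *m M - w 0%N)
    <= 8 * D p 0 * theta.
  move=> [zz ww] Sp j hj.
  set Q := dotp (x j - z j.-1) (x j - z j.-1) + dotp (u j *m M - w j.-1) (u j *m M - w j.-1).
  have eQ : Q = lam ^+ 2 * dotp (v j *m C - d + w j.-1) (v j *m C - d + w j.-1)
                + dotp (u j *m M - w j.-1) (u j *m M - w j.-1).
    by rewrite /Q /x /= xdiff.
  have hG := G0 j hj.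
  have s2 := scal2 hl (dotp_ge0 (v j *m C - d + w j.-1)) (dotp_ge0 (u j *m M - w j.-1))
    (dotp_ge0 (u j *m M + v j *m C - d)).
  rewrite -numid gG // -/tau -eQ -/(G j) in s2.
  have hQ : tau ^+ 2 * Q <= 4 * (gamma j ^+ 2 * G j).
    have : tau ^+ 2 * Q * G j <= 4 * (gamma j ^+ 2 * G j) * G j.
      by apply: le_trans s2 _; apply: eqle; ring.
    by rewrite ler_pM2r.
  have hg := g2G _ Sp j hj.
  set c := tau ^+ 2 * (1 - rhobar) ^+ 2.
  have c0 : 0 < c by rewrite /c mulr_gt0 // exprn_gt0.
  have hcQ : c * Q <= 4 * D (zz, ww) 0.
    have : c * Q = (1 - rhobar) ^+ 2 * (tau ^+ 2 * Q) by rewrite /c; ring.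
    move=> ->; have r2p : 0 <= (1 - rhobar) ^+ 2 by exact: sqr_ge0.
    have := ler_wpM2l r2p hQ; lra.
  have hQ2 : Q <= c^-1 * (4 * D (zz, ww) 0).
    by rewrite ler_pdivlMl.
  have t1 := tri (x j) (z j.-1) (z 0%N).
  have t2 := tri (z j.-1) zz (z 0%N).
  have t3 := tri (u j *m M) (w j.-1) (w 0%N).
  have t4 := tri (w j.-1) ww (w 0%N).
  have fj := fejD _ Sp j.-1.
  rewrite /D /= in fj hQ2 *.
  rewrite (sqC (z j.-1) (x j)) (sqC (w j.-1) (u j *m M)) in t1 t3.
  rewrite /theta -/c; rewrite /Q in hQ2.
  have ci : 0 <= c^-1 by rewrite invr_ge0 ltW.
  nra.
have Gne : Gam rho gamma k != 0 by rewrite gt_eqF.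
pose K := k%:R * (1 - rhobar) * tau.
have K0 : 0 < K by rewrite /K !mulr_gt0 // ltr0n.
have GK : K / 2 <= Gam rho gamma k by exact: Gam_lb.
have ecbar : ubar k *m M + vbar k *m C - d
    = wavg rho gamma (fun j => u j *m M + v j *m C - d) k.
  by rewrite wavgB wavgD !wavg_mulmx wavg_const.
have sumr : \sum_(1 <= j < k.+1) (rho j * gamma j) *: (u j *m M + v j *m C - d) = z k - z 0%N.
  rewrite big_add1 /= -(telescope_sumr z (leq0n k)).
  by apply: eq_bigr => j _; rewrite (Hz j.+1 isT) /= [RHS]addrC addKr.
have sumw : \sum_(1 <= j < k.+1) (rho j * gamma j) *: (x j - y j) = w 0%N - w k.
  rewrite big_add1 /= -(opprB (w k)) -(telescope_sumr w (leq0n k)) -sumrN.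
  apply: eq_bigr => j _; rewrite (Hw j.+1 isT) /y /=.
  move: (x j.+1) (w j) (u j.+1 *m M) => X W P.
  by apply/rowP => i; rewrite !mxE; ring.
have ex1 : exists s, esubdiff g (epsv k) (vbar k) s /\ 0 = s + xbar k *m C^T.
  exists (- (xbar k *m C^T)); split; last by rewrite addNr.
  have := ergodic_esub gV (proj1 gP) hk al0 sg_g.
  by rewrite wavgN wavg_mulmx.
have ex2 : exists s, esubdiff f (epsu k) (ubar k) s /\ 0 = s + ybar k *m M^T.
  exists (- (ybar k *m M^T)); split; last by rewrite addNr.
  have := ergodic_esub fV (proj1 fP) hk al0 sg_f.
  by rewrite wavgN wavg_mulmx.
have theta0 : 0 < theta.
  rewrite /theta; apply: ltr_wpDl; last exact: ltr01.
  by rewrite invr_ge0 mulr_ge0 // sqr_ge0.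
have bounds : forall p, Se h1 h2 p ->
  [/\ vnorm (ubar k *m M + vbar k *m C - d) * K / 4 <= Num.sqrt (D p 0),
      vnorm (xbar k - ybar k) * K / 4 <= Num.sqrt (D p 0) &
      (epsu k + epsv k) * K / 8 <= D p 0 * theta].
  move=> [zz ww] Sp.
  have Dk := fejD _ Sp k.
  have D0p := D_ge0 (zz, ww) 0%N.
  rewrite /D /= in Dk D0p.
  have Ginv0 : 0 <= (Gam rho gamma k)^-1 by rewrite invr_ge0 ltW.
  have GiK : (Gam rho gamma k)^-1 * K <= 2.
    by rewrite ler_pdivrMl // -[X in _ <= X * _]mulr1; lra.
  have GiK0 : 0 <= (Gam rho gamma k)^-1 * K by rewrite mulr_ge0 // ltW.
  have sD0 := sqrtr_ge0 (D (zz, ww) 0).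
  have fin : forall X : 'rV[R]_n, vnorm X <= 2 * Num.sqrt (D (zz, ww) 0) ->
      vnorm ((Gam rho gamma k)^-1 *: X) * K / 4 <= Num.sqrt (D (zz, ww) 0).
    move=> X hX; rewrite vnormZ //.
    have hh := ler_wpM2l GiK0 hX; have : (Gam rho gamma k)^-1 * K * (2 * Num.sqrt (D (zz, ww) 0))
       <= 2 * (2 * Num.sqrt (D (zz, ww) 0)).
      by apply: ler_wpM2r => //; rewrite mulr_ge0.
    move=> hh2; have -> : (Gam rho gamma k)^-1 * vnorm X * K / 4
       = (Gam rho gamma k)^-1 * K * vnorm X / 4 by ring.
    lra.
  split.
  - rewrite ecbar /wavg sumr; apply: fin; apply: vnorm_le; first exact: D_ge0.
    have := tri (z k) zz (z 0%N); rewrite /D /=.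
    have := dotp_ge0 (ww - w k); have := dotp_ge0 (ww - w 0%N); lra.
  - rewrite -wavgB /wavg sumw; apply: fin; apply: vnorm_le; first exact: D_ge0.
    have := tri (w 0%N) ww (w k); rewrite /D /= (sqC (w 0%N) (w k)) => h.
    have := dotp_ge0 (zz - z k); have := dotp_ge0 (zz - z 0%N); lra.
  pose pb := (xbar k, ubar k *m M).
  have eps_id : Gam rho gamma k * (epsu k + epsv k)
      = \sum_(1 <= j < k.+1) rho j * gamma j * phi j pb.
    have e1 : \sum_(1 <= j < k.+1) rho j * gamma j * phi j pb
       = \sum_(1 <= j < k.+1) (rho j * gamma j * dotp (u j - ubar k) (- (y j *m M^T))
                               + rho j * gamma j * dotp (v j - vbar k) (- (x j *m C^T)))
         + \sum_(1 <= j < k.+1) rho j * gamma j * (dotp (xbar k) (u j *m M + v j *m C - d)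
                               - dotp (x j) (ubar k *m M + vbar k *m C - d)).
      rewrite -big_split; apply: eq_bigr => j _ /=.
      rewrite /phi /= (phi_ident (xbar k) (ubar k *m M) (vbar k *m C)).
      rewrite (dotpC (u j - ubar k)) (dotpC (v j - vbar k)) !adjB; ring.
    have e2 : \sum_(1 <= j < k.+1) rho j * gamma j * (dotp (xbar k) (u j *m M + v j *m C - d)
                 - dotp (x j) (ubar k *m M + vbar k *m C - d)) = 0.
      have -> : \sum_(1 <= j < k.+1) rho j * gamma j * (dotp (xbar k) (u j *m M + v j *m C - d)
                 - dotp (x j) (ubar k *m M + vbar k *m C - d))
        = dotp (xbar k) (\sum_(1 <= j < k.+1) (rho j * gamma j) *: (u j *m M + v j *m C - d))
          - dotp (\sum_(1 <= j < k.+1) (rho j * gamma j) *: x j) (ubar k *m M + vbar k *m C - d).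
        rewrite dotp_sumr dotp_suml -sumrB; apply: eq_bigr => j _.
        by rewrite dotpZr dotpZl mulrBr.
      by rewrite !sum_wavg // -ecbar dotpZr dotpZl /xbar subrr.
    rewrite e1 e2 addr0 big_split /= /epsu /epsv mulrDr !mulrA !mulfV // !mul1r.
    done.
  have tele : \sum_(1 <= j < k.+1) rho j * gamma j * phi j pb <= (D pb 0 - D pb k) / 2.
    have : \sum_(1 <= j < k.+1) rho j * gamma j * phi j pb
        <= \sum_(1 <= j < k.+1) (D pb j.-1 - D pb j) / 2.
      rewrite big_nat_cond [X in _ <= X]big_nat_cond.
      apply: ler_sum => j /andP[/andP[hj _] _].
      rewrite KEYj //; have := E0 j hj; lra.
    rewrite -mulr_suml.
    have -> : \sum_(1 <= j < k.+1) (D pb j.-1 - D pb j) = D pb 0 - D pb k.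
      rewrite big_add1 /= -(opprB (D pb k)) -(telescope_sumr (D pb) (leq0n k)) -sumrN.
      by apply: eq_bigr => j _; rewrite opprB.
    done.
  have Dpb : D pb 0 <= 8 * D (zz, ww) 0 * theta.
    rewrite /D /=.
    have ex : xbar k - z 0%N = wavg rho gamma (fun j => x j - z 0%N) k.
      by rewrite wavgB wavg_const.
    have eu : ubar k *m M - w 0%N = wavg rho gamma (fun j => u j *m M - w 0%N) k.
      by rewrite wavgB wavg_mulmx wavg_const.
    rewrite ex eu.
    have j1 := sqjensen (fun j => x j - z 0%N) hk al0.
    have j2 := sqjensen (fun j => u j *m M - w 0%N) hk al0.
    cbv beta in j1; cbv beta in j2.
    have hs : \sum_(1 <= j < k.+1) rho j * gamma j * (dotp (x j - z 0%N) (x j - z 0%N)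
                 + dotp (u j *m M - w 0%N) (u j *m M - w 0%N))
          <= \sum_(1 <= j < k.+1) rho j * gamma j * (8 * D (zz, ww) 0 * theta).
      rewrite big_nat_cond [X in _ <= X]big_nat_cond.
      apply: ler_sum => j /andP[/andP[hj _] _].
      apply: ler_wpM2l; [exact: ltW (al0 j hj) | exact: qbound].
    rewrite -big_distrl /= -/(Gam rho gamma k) in hs.
    have hs' : (Gam rho gamma k)^-1 * \sum_(1 <= j < k.+1) rho j * gamma j *
        (dotp (x j - z 0%N) (x j - z 0%N) + dotp (u j *m M - w 0%N) (u j *m M - w 0%N))
        <= 8 * D (zz, ww) 0 * theta.
      have := ler_wpM2l Ginv0 hs; rewrite mulKf //.
    have esp : \sum_(1 <= j < k.+1) rho j * gamma j *
        (dotp (x j - z 0%N) (x j - z 0%N) + dotp (u j *m M - w 0%N) (u j *m M - w 0%N))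
      = \sum_(1 <= j < k.+1) rho j * gamma j * dotp (x j - z 0%N) (x j - z 0%N)
        + \sum_(1 <= j < k.+1) rho j * gamma j * dotp (u j *m M - w 0%N) (u j *m M - w 0%N).
      by rewrite -big_split; apply: eq_bigr => j _; rewrite mulrDr.
    rewrite esp mulrDr /D /= in hs'; lra.
  have Dpbk := D_ge0 pb k.
  have hmain : Gam rho gamma k * (epsu k + epsv k) <= 4 * D (zz, ww) 0 * theta.
    rewrite eps_id; lra.
  have D0t : 0 <= D (zz, ww) 0 * theta by rewrite mulr_ge0 // ?D_ge0 // ltW.
  case: (lerP 0 (epsu k + epsv k)) => he.
    have := ler_wpM2l he GK; rewrite /D /= in D0t hmain *; lra.
  rewrite /D /= in D0t *.
  have : (epsu k + epsv k) * K < 0 by rewrite pmulr_llt0.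
  lra.
have Sne : Se h1 h2 (zs, us *m M) by exact: saddle_Se fP gP h1E h2E Hsad.
have lbP : forall c, (forall p, Se h1 h2 p -> c <= Num.sqrt (D p 0)) -> c <= d0.
  move=> c hc; rewrite /d0 /dist_pair; apply: lb_le_inf.
    by exists (Num.sqrt (D (zs, us *m M) 0)); exists (zs, us *m M).
  by move=> _ [p Sp <-]; exact: hc.
have b1 : forall p, Se h1 h2 p ->
    vnorm (ubar k *m M + vbar k *m C - d) * K / 4 <= Num.sqrt (D p 0).
  by move=> p Sp; case: (bounds p Sp).
have b2 : forall p, Se h1 h2 p -> vnorm (xbar k - ybar k) * K / 4 <= Num.sqrt (D p 0).
  by move=> p Sp; case: (bounds p Sp).
have b3 : forall p, Se h1 h2 p -> (epsu k + epsv k) * K / 8 <= D p 0 * theta.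
  by move=> p Sp; case: (bounds p Sp).
have c1 := lbP _ b1.
have c2 := lbP _ b2.
split => //.
- rewrite -/K ler_pdivlMr //; lra.
- rewrite -/K ler_pdivlMr //; lra.
- rewrite -/K.
  have d00 : 0 <= d0 by apply: le_trans c1; rewrite /vnorm !mulr_ge0 ?sqrtr_ge0 // ltW.
  case: (lerP (epsu k + epsv k) 0) => he.
    apply: le_trans he _; apply: divr_ge0; last exact: ltW.
    by rewrite !mulr_ge0 ?sqr_ge0 // ltW.
  set X := (epsu k + epsv k) * K / (8 * theta).
  have X0 : 0 < X by rewrite /X; apply: divr_gt0; apply: mulr_gt0 => //; lra.
  have hX : Num.sqrt X <= d0.
    apply: lbP => p Sp; rewrite ler_sqrt; last exact: D_ge0.
    rewrite /X ler_pdivrMr ?mulr_gt0 //; have := b3 p Sp; lra.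
  have sX := sqr_sqrtr (ltW X0).
  have sX0 := sqrtr_ge0 X.
  have hX2 : X <= d0 ^+ 2.
    rewrite -sX; apply: ler_pM => //.
  rewrite ler_pdivlMr //.
  move: hX2; rewrite /X ler_pdivrMr ?mulr_gt0 //; lra.
Qed.
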